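(* Let $\{Z_n\}_{n\in\mathbb{N}}$ be a sequence of diagonal matrices $Z_n=\mathrm{diag}(z_1^{(n)},\ldots,z_n^{(n)})$ with $z_j^{(n)}\geq 1$ having bounded squeezing of degree $\zeta\ge0$, such that $\lambda(n)=\frac{1}{2n}\sum_{j=1}^n (z_j^{(n)}+1/z_j^{(n)})$ is uniformly bounded in $n$, and let $\{k_n\}$ be a sequence of subsystem sizes bounded of degree $\kappa\ge0$; write $k=k_n$. Define $f:U(n)\to\mathbb{R}$ by $f(U)=\mathrm{tr}\Big[\big((J_kM_{n,k}(U))^2+\lambda(n)^2I_{2k}\big)^2\Big]$. Equip $U(n)$ with the Hilbert–Schmidt distance $d(U,V)=\|U-V\|_2=\sqrt{\mathrm{tr}((U-V)^*(U-V))}$. Then the Lipschitz constant of $f$ is upper bounded by $Cn^{4\zeta+\kappa/2}$, where $C>0$ is a constant.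
   Context: $J_k=\begin{pmatrix}0_k&-I_k\\ I_k&0_k\end{pmatrix}$. For $U\in U(n)$, $\eta(U)=\begin{pmatrix}\mathrm{Re}(U)&\mathrm{Im}(U)\\ -\mathrm{Im}(U)&\mathrm{Re}(U)\end{pmatrix}$, $M_n(U)=\eta(U)(Z_n\oplus Z_n^{-1})\eta(U)^T$, and $M_{n,k}(U)$ is the $2k\times2k$ submatrix of $M_n(U)$ with rows and columns indexed by $\{1,\ldots,k\}\cup\{n+1,\ldots,n+k\}$. Bounded squeezing of degree $\zeta$: there is $C>0$ with $\|Z_n\|_\infty\le Cn^\zeta$ for all large $n$. Subsystem sizes $k_n\in\{1,\ldots,n\}$ bounded of degree $\kappa$: there is $K>0$ with $k_n\le Kn^\kappa$ for all large $n$. *)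

(* Defs.v *)
From HB Require Import structures.
From mathcomp Require Import all_boot all_order all_algebra.
From mathcomp Require Import all_classical all_reals all_analysis.
From mathcomp Require Import complex.
Set Implicit Arguments. Unset Strict Implicit. Unset Printing Implicit Defensive.
Import Order.TTheory GRing.Theory Num.Theory.
Local Open Scope ring_scope.

Section Defs.
Variable R : realType.
Local Notation C := (complex R).

Definition Jmx (k : nat) : 'M[R]_(k + k) :=
  block_mx 0 (- 1%:M) 1%:M 0.

Definition unitary (n : nat) (U : 'M[C]_n) : Prop :=
  U *m (map_mx (@conjc R) U)^T = 1%:M.

Definition eta (n : nat) (U : 'M[C]_n) : 'M[R]_(n + n) :=
  block_mx (map_mx (@complex.Re R) U) (map_mx (@complex.Im R) U)
           (- map_mx (@complex.Im R) U) (map_mx (@complex.Re R) U).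

Definition Zdiag (n : nat) (z : 'I_n -> R) : 'M[R]_n := diag_mx (\row_j z j).

Definition Zsum (n : nat) (z : 'I_n -> R) : 'M[R]_(n + n) :=
  block_mx (Zdiag z) 0 0 (invmx (Zdiag z)).

Definition Mn (n : nat) (z : 'I_n -> R) (U : 'M[C]_n) : 'M[R]_(n + n) :=
  eta U *m Zsum z *m (eta U)^T.

(* entry of a square matrix at nat-indices (0 outside the range) *)
Definition mget (m : nat) (A : 'M[R]_m) (a b : nat) : R :=
  match @insub _ (fun i => i < m)%N 'I_m a, @insub _ (fun i => i < m)%N 'I_m b with
  | Some i, Some j => A i j
  | _, _ => 0
  end.

(* 0-based index map 'I_(k+k) -> rows {0..k-1} U {n..n+k-1} of a 2n x 2n matrix,
   i.e. the 1-based rows {1..k} U {n+1..n+k} in increasing order *)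
Definition subidx (n k : nat) (i : 'I_(k + k)) : nat :=
  if (i < k)%N then val i else (n + (val i - k))%N.

Definition Mnk (n : nat) (z : 'I_n -> R) (k : nat) (U : 'M[C]_n) : 'M[R]_(k + k) :=
  \matrix_(i, j) mget (Mn z U) (@subidx n k i) (@subidx n k j).

Definition lambda (n : nat) (z : 'I_n -> R) : R :=
  (2 * n%:R)^-1 * \sum_(j < n) (z j + (z j)^-1).

Definition fU (n : nat) (z : 'I_n -> R) (k : nat) (U : 'M[C]_n) : R :=
  let A := Jmx k *m Mnk z k U in
  let B := A *m A + (lambda z ^+ 2)%:M in
  \tr (B *m B).

(* Hilbert-Schmidt distance ||U - V||_2 = sqrt(tr((U-V)^*(U-V))) = sqrt(sum_{ij} |U_ij - V_ij|^2) *)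
Definition hsdist (n : nat) (U V : 'M[C]_n) : R :=
  Num.sqrt (\sum_(i < n) \sum_(j < n)
     ((complex.Re (U i j - V i j)) ^+ 2 + (complex.Im (U i j - V i j)) ^+ 2)).

End Defs.
Arguments subidx n k i : clear implicits.

(* Main.v *)
Require Import Defs.
From HB Require Import structures.
From mathcomp Require Import all_boot all_order all_algebra.
From mathcomp Require Import all_classical all_reals all_analysis.
From mathcomp Require Import complex.
From mathcomp Require Import ring lra zify.
Set Implicit Arguments. Unset Strict Implicit. Unset Printing Implicit Defensive.
Import Order.TTheory GRing.Theory Num.Theory.
Local Open Scope ring_scope.

Section Gen.
Variable R : rcfType.

Definition fro m n (A : 'M[R]_(m,n)) : R := \sum_i \sum_j A i j ^+ 2.

Lemma fro_ge0 m n (A : 'M[R]_(m,n)) : 0 <= fro A.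
Proof. by apply: sumr_ge0 => i _; apply: sumr_ge0 => j _; exact: sqr_ge0. Qed.

Lemma fro_tr m n (A : 'M[R]_(m,n)) : fro A = \tr (A *m A^T).
Proof.
rewrite /fro /mxtrace; apply: eq_bigr => i _; rewrite mxE; apply: eq_bigr => j _.
by rewrite mxE expr2.
Qed.

Lemma fro_trmx m n (A : 'M[R]_(m,n)) : fro A^T = fro A.
Proof.
by rewrite /fro exchange_big; apply: eq_bigr => i _; apply: eq_bigr => j _; rewrite mxE.
Qed.

Lemma fro_trT m n (A : 'M[R]_(m,n)) : fro A = \tr (A^T *m A).
Proof. by rewrite -fro_trmx fro_tr trmxK. Qed.

Lemma fro_opp m n (A : 'M[R]_(m,n)) : fro (- A) = fro A.
Proof. by apply: eq_bigr => i _; apply: eq_bigr => j _; rewrite mxE sqrrN. Qed.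

Lemma fro_iso p m q (Q : 'M[R]_(p,m)) (B : 'M[R]_(m,q)) :
  Q^T *m Q = 1%:M -> fro (Q *m B) = fro B.
Proof.
move=> h; rewrite fro_trT trmx_mul -mulmxA (mulmxA Q^T) h mul1mx.
by rewrite -fro_trT.
Qed.

Lemma fro_contr p m q (Q : 'M[R]_(p,m)) (B : 'M[R]_(m,q)) :
  Q *m Q^T = 1%:M -> fro (Q *m B) <= fro B.
Proof.
move=> h.
set Pi := Q^T *m Q.
have PiT : Pi^T = Pi by rewrite /Pi trmx_mul trmxK.
have PiPi : Pi *m Pi = Pi by rewrite /Pi mulmxA -(mulmxA Q^T) h mulmx1.
have e1 : fro (Q *m B) = \tr (B^T *m (Pi *m B)).
  by rewrite fro_trT trmx_mul -mulmxA (mulmxA Q^T).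
clearbody Pi.
set E := B - Pi *m B.
have e2 : fro E = fro B - \tr (B^T *m (Pi *m B)).
  rewrite fro_trT /E [(B - _)^T]raddfB /= trmx_mul PiT mulmxBl !mulmxBr.
  rewrite -!mulmxA (mulmxA Pi) PiPi !raddfB /= -fro_trT; ring.
by have := fro_ge0 E; rewrite e2 e1 subr_ge0.
Qed.

Lemma fro_diag m q (S : 'M[R]_m) (B : 'M[R]_(m,q)) s :
  (forall i j, i != j -> S i j = 0) -> (forall i, S i i ^+ 2 <= s) ->
  fro (S *m B) <= s * fro B.
Proof.
move=> h0 hs; rewrite /fro mulr_sumr; apply: ler_sum => i _.
rewrite mulr_sumr; apply: ler_sum => j _.
rewrite mxE (bigD1 i) //= big1 ?addr0; last first.
  by move=> l /negbTE hl; rewrite h0 ?mul0r // eq_sym hl.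
by rewrite exprMn ler_wpM2r ?sqr_ge0.
Qed.

Lemma cs (T : finType) (a b : T -> R) :
  (\sum_x a x * b x) ^+ 2 <= (\sum_x a x ^+ 2) * (\sum_x b x ^+ 2).
Proof.
have h1 : \sum_x \sum_y (a x * b y - a y * b x) ^+ 2 =
  \sum_x \sum_y (a x ^+ 2 * b y ^+ 2) + \sum_x \sum_y (a y ^+ 2 * b x ^+ 2)
   - 2 * \sum_x \sum_y (a x * b x * (a y * b y)).
  rewrite mulr_sumr -big_split -sumrB /=; apply: eq_bigr => x _.
  rewrite mulr_sumr -big_split -sumrB /=; apply: eq_bigr => y _; ring.
have h2 : \sum_x \sum_y (a x ^+ 2 * b y ^+ 2) = (\sum_x a x ^+ 2) * (\sum_x b x ^+ 2).
  by rewrite mulr_suml; apply: eq_bigr => x _; rewrite mulr_sumr.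
have h3 : \sum_x \sum_y (a y ^+ 2 * b x ^+ 2) = (\sum_x a x ^+ 2) * (\sum_x b x ^+ 2).
  by rewrite exchange_big h2.
have h4 : \sum_x \sum_y (a x * b x * (a y * b y)) = (\sum_x a x * b x) ^+ 2.
  by rewrite expr2 mulr_suml; apply: eq_bigr => x _; rewrite mulr_sumr.
have h0 : 0 <= \sum_x \sum_y (a x * b y - a y * b x) ^+ 2.
  by apply: sumr_ge0 => x _; apply: sumr_ge0 => y _; exact: sqr_ge0.
rewrite h1 h2 h3 h4 in h0; lra.
Qed.

Lemma tr_le m (E D : 'M[R]_m) :
  `|\tr (E *m D)| <= Num.sqrt (fro E) * Num.sqrt (fro D).
Proof.
rewrite -sqrtr_sqr -sqrtrM ?fro_ge0 // ler_sqrt; last by rewrite mulr_ge0 ?fro_ge0.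
have -> : \tr (E *m D) = \sum_p (E p.1 p.2 * D^T p.1 p.2).
  rewrite -(pair_bigA _ (fun i j => E i j * D^T i j)) /=.
  by apply: eq_bigr => i _; rewrite mxE; apply: eq_bigr => j _; rewrite mxE.
rewrite -[fro D]fro_trmx /fro !(pair_bigA _ (fun i j => _ ^+ 2)) /=.
exact: cs.
Qed.

End Gen.

Section Gen2.
Variable R : rcfType.

Lemma fro_chain3 m (A1 A2 A3 : 'M[R]_m) (c : R) : 0 <= c ->
  (forall p (B : 'M[R]_(m, p)), fro (A1 *m B) <= c * fro B) ->
  (forall p (B : 'M[R]_(m, p)), fro (A2 *m B) <= c * fro B) ->
  (forall p (B : 'M[R]_(m, p)), fro (A3 *m B) <= c * fro B) ->
  fro (A1 *m A2 *m A3) <= c ^+ 3 * m%:R.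
Proof.
move=> hc h1 h2 h3.
rewrite -(mulmx1 (A1 *m A2 *m A3)) -!mulmxA.
have e : c ^+ 3 * m%:R = c * (c * (c * m%:R)) by ring.
rewrite e; apply: le_trans (h1 _ _) _; apply: (ler_wpM2l hc).
apply: le_trans (h2 _ _) _; apply: (ler_wpM2l hc).
apply: le_trans (h3 _ _) _; apply: (ler_wpM2l hc).
by rewrite fro_tr trmx1 mulmx1 mxtrace1.
Qed.

Lemma fro_chain1 m (A1 : 'M[R]_m) (c : R) :
  (forall p (B : 'M[R]_(m, p)), fro (A1 *m B) <= c * fro B) ->
  fro A1 <= c * m%:R.
Proof.
move=> h1; rewrite -(mulmx1 A1); apply: le_trans (h1 _ _) _.
by rewrite fro_tr trmx1 mulmx1 mxtrace1.
Qed.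

Lemma tr4 m (A B : 'M[R]_m) :
  \tr (A *m A *m A *m A) - \tr (B *m B *m B *m B) =
  \tr (A *m A *m A *m (A - B)) + \tr (B *m A *m A *m (A - B))
  + \tr (B *m B *m A *m (A - B)) + \tr (B *m B *m B *m (A - B)).
Proof.
rewrite !mulmxBr !raddfB /=.
have e1 : \tr (A *m A *m A *m B) = \tr (B *m A *m A *m A) by rewrite mxtrace_mulC !mulmxA.
have e2 : \tr (B *m A *m A *m B) = \tr (B *m B *m A *m A) by rewrite mxtrace_mulC !mulmxA.
have e3 : \tr (B *m B *m A *m B) = \tr (B *m B *m B *m A) by rewrite mxtrace_mulC !mulmxA.
rewrite e1 e2 e3; ring.
Qed.

Lemma tr2 m (A B : 'M[R]_m) :
  \tr (A *m A) - \tr (B *m B) = \tr (A *m (A - B)) + \tr (B *m (A - B)).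
Proof.
rewrite !mulmxBr !raddfB /=.
have e1 : \tr (A *m B) = \tr (B *m A) by rewrite mxtrace_mulC.
rewrite e1; ring.
Qed.

Lemma sqrt_sq_mul (q x : R) : 0 <= q -> Num.sqrt (q ^+ 2 * x) = q * Num.sqrt x.
Proof. by move=> hq; rewrite sqrtrM ?sqr_ge0 // sqrtr_sqr ger0_norm. Qed.

Lemma key_bound m (A B : 'M[R]_m) (c l K : R) : 0 <= c -> 0 <= l -> l <= c ->
  (forall p (X : 'M[R]_(m, p)), fro (A *m X) <= c * fro X) ->
  (forall p (X : 'M[R]_(m, p)), fro (B *m X) <= c * fro X) ->
  `| (\tr (A *m A *m A *m A) + 2 * l * \tr (A *m A) + K)
    - (\tr (B *m B *m B *m B) + 2 * l * \tr (B *m B) + K) |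
  <= 8 * c * Num.sqrt (c * m%:R) * Num.sqrt (fro (A - B)).
Proof.
move=> hc hl hlc hA hB.
have -> : (\tr (A *m A *m A *m A) + 2 * l * \tr (A *m A) + K)
    - (\tr (B *m B *m B *m B) + 2 * l * \tr (B *m B) + K) =
    (\tr (A *m A *m A *m A) - \tr (B *m B *m B *m B))
    + 2 * l * (\tr (A *m A) - \tr (B *m B)) by ring.
rewrite tr4 tr2.
set w := Num.sqrt (c * m%:R); set r := Num.sqrt (fro (A - B)).
have hw : 0 <= w by exact: sqrtr_ge0.
have hr : 0 <= r by exact: sqrtr_ge0.
have hT3 : forall E : 'M[R]_m, fro E <= c ^+ 3 * m%:R -> `|\tr (E *m (A - B))| <= c * w * r.
  move=> E hE; apply: le_trans (tr_le _ _) _; apply: ler_wpM2r => //.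
  rewrite /w -sqrt_sq_mul // ler_sqrt; last by rewrite mulr_ge0 ?sqr_ge0 ?mulr_ge0.
  by rewrite mulrA -exprSr.
have hT1 : forall E : 'M[R]_m, fro E <= c * m%:R -> `|\tr (E *m (A - B))| <= w * r.
  move=> E hE; apply: le_trans (tr_le _ _) _; apply: ler_wpM2r => //.
  by rewrite /w ler_sqrt // mulr_ge0.
have t1 := hT3 _ (fro_chain3 hc hA hA hA).
have t2 := hT3 _ (fro_chain3 hc hB hA hA).
have t3 := hT3 _ (fro_chain3 hc hB hB hA).
have t4 := hT3 _ (fro_chain3 hc hB hB hB).
have u1 := hT1 _ (fro_chain1 hA).
have u2 := hT1 _ (fro_chain1 hB).
set x1 := \tr (A *m A *m A *m (A - B)) in t1 *.
set x2 := \tr (B *m A *m A *m (A - B)) in t2 *.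
set x3 := \tr (B *m B *m A *m (A - B)) in t3 *.
set x4 := \tr (B *m B *m B *m (A - B)) in t4 *.
set y1 := \tr (A *m (A - B)) in u1 *.
set y2 := \tr (B *m (A - B)) in u2 *.
have n1 := ler_normD (x1 + x2 + x3 + x4) (2 * l * (y1 + y2)).
have n2 := ler_normD (x1 + x2 + x3) x4.
have n3 := ler_normD (x1 + x2) x3.
have n4 := ler_normD x1 x2.
have n5 := ler_normD y1 y2.
have n6 : `|2 * l * (y1 + y2)| = 2 * l * `|y1 + y2|.
  by rewrite normrM ger0_norm // mulr_ge0.
have n7 : 2 * l * `|y1 + y2| <= 2 * c * (w * r + w * r).
  apply: ler_pM; rewrite ?mulr_ge0 ?normr_ge0 //; first lra.
  lra.
have e : 8 * c * w * r = 4 * (c * w * r) + 2 * c * (w * r + w * r) by ring.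
rewrite e; lra.
Qed.

End Gen2.

Section Spec.
Variable R : realType.

Lemma subidx_lt n k (i : 'I_(k + k)) : (k <= n)%N -> (subidx n k i < n + n)%N.
Proof. move=> hk; have hi := ltn_ord i; rewrite /subidx; case: (ltnP i k) => /= ?; lia. Qed.

Lemma subidx_inj n k (i j : 'I_(k + k)) : (k <= n)%N -> subidx n k i = subidx n k j -> i = j.
Proof.
move=> hk; have hi := ltn_ord i; have hj := ltn_ord j.
rewrite /subidx; case: (ltnP i k) => hi'; case: (ltnP j k) => hj' h; apply: ord_inj; move: h; rewrite /= -!/(nat_of_ord _); lia.
Qed.

Lemma sel_sum N a (h : (a < N)%N) (F : 'I_N -> R) :
  \sum_(l < N) ((a == l :> nat)%:R * F l) = F (Ordinal h).
Proof.
rewrite (bigD1 (Ordinal h)) //= eqxx mul1r big1 ?addr0 // => l hl.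
case: eqP => [e|]; last by rewrite mul0r.
by case/eqP: hl; apply: val_inj.
Qed.

Definition sel n k : 'M[R]_(k + k, n + n) :=
  \matrix_(i, j) ((subidx n k i == j :> nat)%:R).

Lemma selT n k : (k <= n)%N -> sel n k *m (sel n k)^T = 1%:M.
Proof.
move=> hk; apply/matrixP => i j; rewrite !mxE.
under eq_bigr do rewrite !mxE.
rewrite (sel_sum (subidx_lt i hk) (fun l => (subidx n k j == l :> nat)%:R)) /=.
case: (eqVneq i j) => [->|hij]; first by rewrite eqxx.
case: eqP => // e; case/eqP: hij; apply: (subidx_inj hk); by rewrite e.
Qed.

Lemma Mnk_sel n k (z : 'I_n -> R) (U : 'M[R[i]]_n) : (k <= n)%N ->
  Mnk z k U = sel n k *m Mn z U *m (sel n k)^T.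
Proof.
move=> hk; apply/matrixP => i j; rewrite !mxE.
under eq_bigr do rewrite !mxE.
under eq_bigr do under eq_bigr do rewrite !mxE.
under eq_bigr do rewrite (sel_sum (subidx_lt i hk)).
under eq_bigr do rewrite mulrC.
rewrite (sel_sum (subidx_lt j hk)) /mget.
rewrite (insubT (fun a => (a < n + n)%N) (subidx_lt i hk)).
rewrite (insubT (fun a => (a < n + n)%N) (subidx_lt j hk)).
by rewrite /Mn mxE.
Qed.


Lemma ReB (a b : R[i]) : complex.Re (a - b) = complex.Re a - complex.Re b.
Proof. by case: a => ? ?; case: b. Qed.
Lemma ImB (a b : R[i]) : complex.Im (a - b) = complex.Im a - complex.Im b.
Proof. by case: a => ? ?; case: b. Qed.
Lemma ReD : {morph (@complex.Re R) : x y / x + y}.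
Proof. by move=> [? ?] [? ?]. Qed.
Lemma ImD : {morph (@complex.Im R) : x y / x + y}.
Proof. by move=> [? ?] [? ?]. Qed.
Lemma ReMc (a b : R[i]) : complex.Re (a * b^*%C) =
  complex.Re a * complex.Re b + complex.Im a * complex.Im b.
Proof. case: a => a1 a2; case: b => b1 b2 /=; ring. Qed.
Lemma ImMc (a b : R[i]) : complex.Im (a * b^*%C) =
  complex.Im a * complex.Re b - complex.Re a * complex.Im b.
Proof. case: a => a1 a2; case: b => b1 b2 /=; ring. Qed.

Lemma eta_orth n (U : 'M[R[i]]_n) : unitary U -> Defs.eta U *m (Defs.eta U)^T = 1%:M.
Proof.
move=> hU.
set X := map_mx (@complex.Re R) U; set Y := map_mx (@complex.Im R) U.
have h1 : X *m X^T + Y *m Y^T = 1%:M.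
  apply/matrixP => i j.
  have := congr1 (fun M : 'M[R[i]]_n => complex.Re (M i j)) hU.
  rewrite /= !mxE (big_morph _ ReD (erefl _)) => e.
  rewrite -[RHS](_ : complex.Re ((1 : R[i]) *+ (i == j)) = _); last by case: (i == j).
  rewrite -e -big_split /=; apply: eq_bigr => l _; rewrite !mxE ReMc.
  done.
have h2 : Y *m X^T = X *m Y^T.
  apply/eqP; rewrite -subr_eq0; apply/eqP/matrixP => i j.
  have := congr1 (fun M : 'M[R[i]]_n => complex.Im (M i j)) hU.
  rewrite /= !mxE (big_morph _ ImD (erefl _)) => e.
  rewrite -[RHS](_ : complex.Im ((1 : R[i]) *+ (i == j)) = _); last by case: (i == j).
  rewrite -e -sumrB /=; apply: eq_bigr => l _; rewrite !mxE ImMc.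
  done.
have tN : forall (A : 'M[R]_n), (- A)^T = - A^T.
  by move=> A; apply/matrixP=> i j; rewrite !mxE.
rewrite /Defs.eta -/X -/Y tr_block_mx mulmx_block scalar_mx_block.
rewrite ![(- Y)^T]raddfN /= !mulmxN !mulNmx opprK h2 addNr.
by rewrite [Y *m Y^T + _]addrC h1.
Qed.

Lemma J_orth k : Jmx R k *m (Jmx R k)^T = 1%:M.
Proof.
rewrite /Jmx tr_block_mx mulmx_block scalar_mx_block !trmx0 raddfN /= trmx1.
by rewrite !mul0mx !mulmx0 !addr0 !add0r mulmxN mulmx1 mulmx1 opprK.
Qed.

Lemma Zsum_diag n (z : 'I_n -> R) : (forall j, z j != 0) ->
  Zsum z = diag_mx (row_mx (\row_j z j) (\row_j (z j)^-1)).
Proof.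
move=> hz; rewrite /Zsum diag_mx_row; congr block_mx.
have e : Zdiag z *m diag_mx (\row_j (z j)^-1) = 1%:M.
  rewrite /Zdiag mulmx_diag -diag_const_mx; congr diag_mx.
  by apply/rowP => j; rewrite !mxE divff.
have [hu _] := mulmx1_unit e.
by rewrite -[RHS]mul1mx -(mulVmx hu) -mulmxA e mulmx1.
Qed.

Lemma fro_block m1 m2 n1 n2 (A : 'M[R]_(m1, n1)) (B : 'M[R]_(m1, n2))
  (C : 'M[R]_(m2, n1)) (D : 'M[R]_(m2, n2)) :
  fro (block_mx A B C D) = fro A + fro B + fro C + fro D.
Proof.
have e1 : forall i, \sum_j (block_mx A B C D) (lshift m2 i) j ^+ 2 =
    \sum_j A i j ^+ 2 + \sum_j B i j ^+ 2.
  move=> i; rewrite big_split_ord /=; congr (_ + _); apply: eq_bigr => j _.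
    by rewrite block_mxEul.
  by rewrite block_mxEur.
have e2 : forall i, \sum_j (block_mx A B C D) (rshift m1 i) j ^+ 2 =
    \sum_j C i j ^+ 2 + \sum_j D i j ^+ 2.
  move=> i; rewrite big_split_ord /=; congr (_ + _); apply: eq_bigr => j _.
    by rewrite block_mxEdl.
  by rewrite block_mxEdr.
rewrite /fro big_split_ord /= (eq_bigr _ (fun i _ => e1 i)) (eq_bigr _ (fun i _ => e2 i)).
rewrite !big_split /=; ring.
Qed.

Lemma sq_add (a b : R) : (a + b) ^+ 2 <= 2 * a ^+ 2 + 2 * b ^+ 2.
Proof.
rewrite -subr_ge0 (_ : _ - _ = (a - b) ^+ 2); [exact: sqr_ge0 | ring].
Qed.

Lemma fro_add m p (A B : 'M[R]_(m, p)) : fro (A + B) <= 2 * fro A + 2 * fro B.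
Proof.
rewrite /fro !mulr_sumr -big_split; apply: ler_sum => i _.
rewrite !mulr_sumr -big_split; apply: ler_sum => j _.
rewrite mxE; exact: sq_add.
Qed.

Definition hsq n (U V : 'M[R[i]]_n) : R := \sum_(i < n) \sum_(j < n)
     ((complex.Re (U i j - V i j)) ^+ 2 + (complex.Im (U i j - V i j)) ^+ 2).

Lemma fro_eta n (U V : 'M[R[i]]_n) : fro (Defs.eta U - Defs.eta V) = 2 * hsq U V.
Proof.
have -> : Defs.eta U - Defs.eta V = block_mx
   (map_mx (@complex.Re R) U - map_mx (@complex.Re R) V)
   (map_mx (@complex.Im R) U - map_mx (@complex.Im R) V)
   (- (map_mx (@complex.Im R) U - map_mx (@complex.Im R) V))
   (map_mx (@complex.Re R) U - map_mx (@complex.Re R) V).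
  rewrite /Defs.eta opp_block_mx add_block_mx; congr block_mx.
  by apply/matrixP => i j; rewrite !mxE; ring.
rewrite fro_block fro_opp.
have H : fro (map_mx (@complex.Re R) U - map_mx (@complex.Re R) V) +
   fro (map_mx (@complex.Im R) U - map_mx (@complex.Im R) V) = hsq U V.
  rewrite /fro /hsq -big_split; apply: eq_bigr => i _.
  rewrite -big_split; apply: eq_bigr => j _; by rewrite !mxE ReB ImB.
lra.
Qed.

Lemma sq_le (a b : R) : 0 <= a -> a <= b -> a ^+ 2 <= b ^+ 2.
Proof. by move=> ha hab; rewrite !expr2 ler_pM. Qed.

Section Main.
Variables (n k : nat) (z : 'I_n -> R) (s : R).
Hypotheses (hk : (k <= n)%N) (hz1 : forall j, 1 <= z j) (hzs : forall j, z j <= s).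

Lemma Sd : forall i j, i != j -> Zsum z i j = 0.
Proof.
move=> i j hij; rewrite Zsum_diag; last by move=> l; apply: lt0r_neq0; have := hz1 l; lra.
by rewrite mxE (negbTE hij) mulr0n.
Qed.

Lemma Sb : forall i, Zsum z i i ^+ 2 <= s ^+ 2.
Proof.
move=> i; rewrite Zsum_diag; last by move=> l; apply: lt0r_neq0; have := hz1 l; lra.
rewrite mxE eqxx mulr1n mxE; case: (fintype.split i) => j; rewrite mxE.
  by apply: sq_le => //; have := hz1 j; lra.
have h1 := hz1 j; have h2 := hzs j.
have hp : 0 < z j by lra.
apply: sq_le; first by rewrite invr_ge0; lra.
have : (z j)^-1 <= 1 by rewrite invf_le1.
lra.
Qed.

Lemma STd : forall i j, i != j -> (Zsum z)^T i j = 0.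
Proof. by move=> i j hij; rewrite mxE Sd // eq_sym. Qed.

Lemma STb : forall i, (Zsum z)^T i i ^+ 2 <= s ^+ 2.
Proof. by move=> i; rewrite mxE Sb. Qed.

Lemma Aop (U : 'M[R[i]]_n) : unitary U -> forall p (B : 'M[R]_(k + k, p)),
  fro (Jmx R k *m Mnk z k U *m B) <= s ^+ 2 * fro B.
Proof.
move=> hU p B; rewrite (Mnk_sel _ _ hk) /Mn !mulmxA -!mulmxA.
apply: le_trans (fro_contr _ (J_orth k)) _.
apply: le_trans (fro_contr _ (selT hk)) _.
apply: le_trans (fro_contr _ (eta_orth hU)) _.
apply: le_trans (fro_diag _ Sd Sb) _.
rewrite fro_iso; last by rewrite trmxK; exact: eta_orth hU.
rewrite fro_iso //; rewrite trmxK; exact: selT hk.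
Qed.

Lemma Dbd (U V : 'M[R[i]]_n) : unitary U -> unitary V ->
  fro (Jmx R k *m Mnk z k U - Jmx R k *m Mnk z k V) <=
  4 * s ^+ 2 * fro (Defs.eta U - Defs.eta V).
Proof.
move=> hU hV; rewrite -mulmxBr.
apply: le_trans (fro_contr _ (J_orth k)) _.
rewrite !(Mnk_sel _ _ hk) -mulmxBl -mulmxBr.
have hsel : forall Y : 'M[R]_(n + n), fro (sel n k *m Y *m (sel n k)^T) <= fro Y.
  move=> Y; rewrite -mulmxA.
  apply: le_trans (fro_contr _ (selT hk)) _.
  rewrite -fro_trmx trmx_mul trmxK.
  apply: le_trans (fro_contr _ (selT hk)) _.
  by rewrite fro_trmx.
apply: le_trans (hsel _) _.
have e : Mn z U - Mn z V = (Defs.eta U - Defs.eta V) *m Zsum z *m (Defs.eta U)^T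
    + Defs.eta V *m Zsum z *m (Defs.eta U - Defs.eta V)^T.
  by rewrite /Mn [(_ - _)^T]raddfB /= mulmxBr !mulmxBl addrA subrK.
rewrite e; apply: le_trans (fro_add _ _) _.
have h1 : fro ((Defs.eta U - Defs.eta V) *m Zsum z *m (Defs.eta U)^T) <=
    s ^+ 2 * fro (Defs.eta U - Defs.eta V).
  rewrite -fro_trmx !trmx_mul trmxK.
  apply: le_trans (fro_contr _ (eta_orth hU)) _.
  apply: le_trans (fro_diag _ STd STb) _.
  by rewrite fro_trmx.
have h2 : fro (Defs.eta V *m Zsum z *m (Defs.eta U - Defs.eta V)^T) <=
    s ^+ 2 * fro (Defs.eta U - Defs.eta V).
  rewrite -mulmxA.
  apply: le_trans (fro_contr _ (eta_orth hV)) _.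
  apply: le_trans (fro_diag _ Sd Sb) _.
  by rewrite fro_trmx.
lra.
Qed.

Lemma fU_expand (U : 'M[R[i]]_n) :
  let A := Jmx R k *m Mnk z k U in
  fU z k U = \tr (A *m A *m A *m A) + 2 * lambda z ^+ 2 * \tr (A *m A)
     + lambda z ^+ 2 ^+ 2 * (k + k)%:R.
Proof.
move=> A; rewrite /fU -/A.
rewrite mulmxDl !mulmxDr mul_mx_scalar mul_scalar_mx mul_scalar_mx scale_scalar_mx !raddfD /= !mxtraceZ mxtrace_scalar !mulmxA.
by rewrite -mulr_natr; ring.
Qed.

Lemma fU_lip (U V : 'M[R[i]]_n) : unitary U -> unitary V ->
  0 <= s -> lambda z ^+ 2 <= s ^+ 2 ->
  `|fU z k U - fU z k V| <= 32 * s ^+ 4 * Num.sqrt k%:R * Num.sqrt (hsq U V).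
Proof.
move=> hU hV hs hl.
rewrite !fU_expand.
have kb := key_bound (lambda z ^+ 2 ^+ 2 * (k + k)%:R) (sqr_ge0 s) (sqr_ge0 (lambda z)) hl (Aop hU) (Aop hV).
apply: le_trans kb _.
rewrite sqrt_sq_mul //.
have hD : Num.sqrt (fro (Jmx R k *m Mnk z k U - Jmx R k *m Mnk z k V))
    <= s * Num.sqrt (8 * hsq U V).
  rewrite -sqrt_sq_mul // ler_sqrt; last first.
    by rewrite mulr_ge0 ?sqr_ge0 // mulr_ge0 // sumr_ge0 // => i _; rewrite sumr_ge0 // => j _; rewrite addr_ge0 ?sqr_ge0.
  by apply: le_trans (Dbd hU hV) _; rewrite fro_eta; lra.
have hk0 : 0 <= Num.sqrt ((k + k)%:R : R) by rewrite sqrtr_ge0.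
apply: le_trans (ler_wpM2l _ hD) _; first by rewrite !mulr_ge0 ?sqr_ge0.
have e : Num.sqrt (k + k)%:R * Num.sqrt (8 * hsq U V) =
   4 * (Num.sqrt k%:R * Num.sqrt (hsq U V)).
  rewrite -sqrtrM // (_ : (k + k)%:R * (8 * hsq U V) = 4 ^+ 2 * (k%:R * hsq U V)).
    by rewrite sqrt_sq_mul ?sqrtrM.
  by rewrite natrD; ring.
have -> : 8 * s ^+ 2 * (s * Num.sqrt (k + k)%:R) * (s * Num.sqrt (8 * hsq U V)) =
  8 * s ^+ 4 * (Num.sqrt (k + k)%:R * Num.sqrt (8 * hsq U V)) by ring.
rewrite e (_ : 8 * s ^+ 4 * (4 * _) = 32 * s ^+ 4 * Num.sqrt k%:R * Num.sqrt (hsq U V)) //; ring.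
Qed.

End Main.
End Spec.

Lemma npow_ge1 (R : realType) (n : nat) (a : R) : (0 < n)%N -> 0 <= a -> 1 <= n%:R `^ a.
Proof.
move=> hn ha; rewrite -[X in X <= _](powRr0 (n%:R : R)); apply: ler_powR => //.
by rewrite ler1n.
Qed.

Lemma npow_sq (R : realType) (n : nat) (a : R) (m : nat) :
  (n%:R `^ a) ^+ m = n%:R `^ (a * m%:R).
Proof. by rewrite -powR_mulrn ?powR_ge0 // powRrM. Qed.

Theorem lemma4 (R : realType) (z : forall n : nat, 'I_n -> R) (k : nat -> nat)
    (zeta kappa : R) :
  (forall (n : nat) (j : 'I_n), 1 <= z n j) ->
  0 <= zeta ->
  (exists C : R, 0 < C /\ exists N : nat, forall n : nat, (N <= n)%N ->
      forall j : 'I_n, z n j <= C * (n%:R `^ zeta)) ->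
  (exists L : R, forall n : nat, (0 < n)%N -> lambda (z n) <= L) ->
  (forall n : nat, (0 < n)%N -> (0 < k n)%N && (k n <= n)%N) ->
  0 <= kappa ->
  (exists K : R, 0 < K /\ exists N : nat, forall n : nat, (N <= n)%N ->
      (k n)%:R <= K * (n%:R `^ kappa)) ->
  exists C : R, 0 < C /\
    forall n : nat, (0 < n)%N ->
      forall U V : 'M[complex R]_n, unitary U -> unitary V ->
        `| fU (z n) (k n) U - fU (z n) (k n) V |
          <= C * (n%:R `^ (4 * zeta + kappa / 2)) * hsdist U V.
Proof.
move=> hz1 hzeta [C0 [hC0 [N1 hN1]]] _ hkn hkappa [K [hK [N2 hN2]]].
pose Zs := \sum_(m < N1) \sum_(j < m) z m j.
have hZs0 : 0 <= Zs.
  apply: sumr_ge0 => m _; apply: sumr_ge0 => j _; have := hz1 m j; lra.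
pose S0 := C0 + Zs + 1.
pose K' := K + N2%:R + 1.
have hS0 : 1 <= S0 by rewrite /S0; lra.
have hK' : 1 <= K' by rewrite /K'; have := ler0n R N2; lra.
exists (32 * S0 ^+ 4 * K'); split.
  by rewrite !mulr_gt0 // ?exprn_gt0; lra.
move=> n hn U V hU hV.
have /andP [hk0 hkn'] := hkn n hn.
have hp1 := npow_ge1 hn hzeta.
pose s := S0 * n%:R `^ zeta.
have hs1 : 1 <= s by rewrite /s -[X in X <= _]mulr1; apply: ler_pM => //; lra.
have hzs : forall j, z n j <= s.
  move=> j; case: (leqP N1 n) => hnN.
    apply: le_trans (hN1 n hnN j) _; apply: ler_wpM2r; first exact: powR_ge0.
    rewrite /S0; lra.
  have : z n j <= Zs.
    rewrite /Zs (bigD1 (Ordinal hnN)) //= (bigD1 j) //=.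
    have h1 : 0 <= \sum_(i < n | i != j) z n i.
      by apply: sumr_ge0 => i _; have := hz1 n i; lra.
    have h2 : 0 <= \sum_(i < N1 | i != Ordinal hnN) \sum_(j0 < i) z i j0.
      by apply: sumr_ge0 => m _; apply: sumr_ge0 => i _; have := hz1 m i; lra.
    lra.
  move=> h; apply: le_trans h _; rewrite /s -[X in X <= _]mulr1; apply: ler_pM => //; rewrite /S0; lra.
have hl : lambda (z n) ^+ 2 <= s ^+ 2.
  have hsum : \sum_(j < n) (z n j + (z n j)^-1) <= \sum_(j < n) (s + s).
    apply: ler_sum => j _; have h1 := hz1 n j; have h2 := hzs j.
    have : (z n j)^-1 <= 1 by rewrite invf_le1 //; lra.
    lra.
  have hsum0 : 0 <= \sum_(j < n) (z n j + (z n j)^-1).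
    apply: sumr_ge0 => j _; have h1 := hz1 n j.
    have : 0 <= (z n j)^-1 by rewrite invr_ge0; lra.
    lra.
  rewrite sumr_const card_ord in hsum.
  have hn0 : (0 : R) < n%:R by rewrite ltr0n.
  apply: sq_le; first by rewrite /lambda mulr_ge0 // invr_ge0; lra.
  rewrite /lambda; rewrite ler_pdivrMl; last lra.
  by apply: le_trans hsum _; rewrite -mulr_natl; lra.
have hkn0 : (k n <= n)%N := hkn'.
have main := fU_lip hkn0 (hz1 n) hzs hU hV (le_trans ler01 hs1) hl.
apply: le_trans main _.
have -> : hsdist U V = Num.sqrt (hsq U V) by [].
have hh : 0 <= Num.sqrt (hsq U V) by rewrite sqrtr_ge0.
pose p := n%:R `^ (kappa / 2).
have hp0 : 0 <= p by exact: powR_ge0.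
have hkb : Num.sqrt (k n)%:R <= K' * p.
  rewrite -(ger0_norm (_ : 0 <= K' * p)); last by rewrite mulr_ge0 //; lra.
  rewrite -sqrtr_sqr ler_sqrt ?sqr_ge0 // exprMn /p npow_sq.
  rewrite (_ : kappa / 2 * 2%:R = kappa); last by field.
  have hkk : (k n)%:R <= K' * n%:R `^ kappa.
    case: (leqP N2 n) => hnN.
      apply: le_trans (hN2 n hnN) _; apply: ler_wpM2r; first exact: powR_ge0.
      rewrite /K'; have := ler0n R N2; lra.
    have : ((k n)%:R : R) <= N2%:R by rewrite ler_nat; lia.
    have hq := npow_ge1 hn hkappa.
    move=> h; apply: le_trans h _; rewrite -[X in X <= _]mulr1; apply: ler_pM => //.
    rewrite /K'; lra.
  apply: le_trans hkk _.
  have hKK : K' <= K' ^+ 2.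
    rewrite expr2 -[X in X <= _]mul1r; apply: (ler_wpM2r (x := K')); lra.
  exact: (ler_wpM2r (powR_ge0 _ _) hKK).
have e1 : s ^+ 4 = S0 ^+ 4 * n%:R `^ (4 * zeta).
  by rewrite /s exprMn npow_sq; congr (_ * _); congr (_ `^ _); rewrite mulrC.
have e2 : n%:R `^ (4 * zeta + kappa / 2) = n%:R `^ (4 * zeta) * p.
  rewrite powRD // (_ : (n%:R : R) != 0) ?implybT //.
  by rewrite pnatr_eq0 -lt0n.
rewrite e1 e2.
have hq0 : 0 <= n%:R `^ (4 * zeta) :> R by exact: powR_ge0.
have -> : 32 * S0 ^+ 4 * K' * (n%:R `^ (4 * zeta) * p) * Num.sqrt (hsq U V) =
   32 * (S0 ^+ 4 * n%:R `^ (4 * zeta)) * (K' * p) * Num.sqrt (hsq U V) by ring.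
rewrite -mulrA -[X in _ <= X]mulrA.
apply: ler_wpM2l; first by rewrite mulr_ge0 // mulr_ge0 // exprn_ge0 //; lra.
apply: ler_wpM2r => //.
Qed.
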